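(* For all typing environments $\Theta,\Gamma$, processes $P$ and session types $S$: (1) if $\Theta\cdot\Gamma\vdash P:S$ is not derivable, then there is a failing derivation of $\Theta\cdot\Gamma\vdash P:S$; (2) if there is a failing derivation of $\Theta\cdot\Gamma\vdash P:S$, then $\Theta\cdot\Gamma\vdash P:S$ is not derivable.
   Context: Values $v$, value variables $x$, process variables $X$; $a$ ranges over values and value variables; boolean predicates $A$ are type-checked by standard rules. Processes: $P,Q ::= \triangleleft \mathtt{l}(a).P \mid \triangleright\{\mathtt{l}_i(x_i).P_i\}_{i\in I} \mid \mu_X.P \mid X \mid \mathsf{if}\ A\ \mathsf{then}\ P\ \mathsf{else}\ Q \mid \mathbf{0}$ (guarded recursion). Base types $\mathsf{B}$ ($\mathsf{Int},\mathsf{Str},\mathsf{Bool},\dots$, tuples). Session types $S ::= \oplus\{!\mathtt{l}_i(\mathsf{B}_i).S_i\}_{i\in I} \mid \&\{?\mathtt{l}_i(\mathsf{B}_i).S_i\}_{i\in I} \mid \mathsf{rec}\ X.S \mid X \mid \mathsf{end}$, $I\neq\emptyset$, labels pairwise distinct, guarded recursion, equi-recursive. Typing judgements $\Theta\cdot\Gamma\vdash P:S$ with $\Theta$ a partial map from process variables to session types and $\Gamma$ a partial map from value variables to base types; $\Gamma\vdash x:\mathsf{B}$ if $\Gamma(x)=\mathsf{B}$, $\Gamma\vdash v:\mathsf{B}$ if $v\in\mathsf{B}$. Derivability is by the rules: (tBra) if for all $i\in I$, $\Theta\cdot\Gamma,x_i:\mathsf{B}_i\vdash P_i:S_i$, then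 $\Theta\cdot\Gamma\vdash \triangleright\{\mathtt{l}_i(x_i).P_i\}_{i\in I\cup J} : \&\{?\mathtt{l}_i(\mathsf{B}_i).S_i\}_{i\in I}$; (tSel) if some $i\in I$ has $\mathtt{l}=\mathtt{l}_i$, $\Gamma\vdash a:\mathsf{B}_i$ and $\Theta\cdot\Gamma\vdash P:S_i$, then $\Theta\cdot\Gamma\vdash \triangleleft\mathtt{l}(a).P : \oplus\{!\mathtt{l}_i(\mathsf{B}_i).S_i\}_{i\in I}$; (tRec) $\Theta,X:S\cdot\Gamma\vdash P:S$ implies $\Theta\cdot\Gamma\vdash\mu_X.P:S$; (tPVar) $\Theta(X)=S$ implies $\Theta\cdot\Gamma\vdash X:S$; (tIf) $\Gamma\vdash A:\mathsf{Bool}$, $\Theta\cdot\Gamma\vdash P:S$, $\Theta\cdot\Gamma\vdash Q:S$ imply $\Theta\cdot\Gamma\vdash \mathsf{if}\ A\ \mathsf{then}\ P\ \mathsf{else}\ Q:S$; (tNil) $\Theta\cdot\Gamma\vdash\mathbf{0}:\mathsf{end}$. Rule function $\Phi$, mapping a judgement $J=\Theta\cdot\Gamma\vdash P:S$ to a set: $\Phi(J)=\{\Theta\cdot\Gamma,x_i:\mathsf{B}_i\vdash P_i:S_i\}_{i\in I}$ if $P=\triangleright\{\mathtt{l}_j(x_j).P_j\}_{j\in I\cup J'}$ and $S=\&\{?\mathtt{l}_i(\mathsf{B}_i).S_i\}_{i\in I}$ for some $I,J'$; $\Phi(J)=\{\Theta\cdot\Gamma\vdash P':S_i\}$ if $P=\triangleleft\mathtt{l}(a).P'$,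 $S=\oplus\{!\mathtt{l}_i(\mathsf{B}_i).S_i\}_{i\in I}$ and there is $i\in I$ with $\mathtt{l}=\mathtt{l}_i$ and $\Gamma\vdash a:\mathsf{B}_i$; $\Phi(J)=\{\Theta\cdot\Gamma\vdash P_1:S,\ \Theta\cdot\Gamma\vdash Q_1:S\}$ if $P=\mathsf{if}\ A\ \mathsf{then}\ P_1\ \mathsf{else}\ Q_1$ and $\Gamma\vdash A:\mathsf{Bool}$; $\Phi(J)=\{\Theta,X:S\cdot\Gamma\vdash P':S\}$ if $P=\mu_X.P'$; $\Phi(J)=\{\mathsf{tt}\}$ if $P=\mathbf{0}$ and $S=\mathsf{end}$, or if $P=X$ and $\Theta(X)=S$; $\Phi(J)=\emptyset$ in all other cases. A failing derivation of $\Theta\cdot\Gamma\vdash P:S$ is a finite sequence of judgements $(J_0,J_1,\dots,J_n)$, each of the form $\Theta_i\cdot\Gamma_i\vdash P_i:S_i$, such that $J_0=\Theta\cdot\Gamma\vdash P:S$, $J_i\in\Phi(J_{i-1})$ for all $i\in 1..n$, and $\Phi(J_n)=\emptyset$. *)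

(* Defs.v *)
From Stdlib Require Import List String ZArith Bool PeanoNat.
Import ListNotations.
Set Implicit Arguments.

Definition label := nat.
Definition vvar := nat.
Definition pvar := nat.
Definition tvar := nat.   (* session-type recursion variables *)

Inductive base : Type :=
| BInt | BStr | BBool | BTuple (bs : list base).

Inductive value : Type :=
| VInt (z : Z) | VStr (s : string) | VBool (b : bool) | VTuple (vs : list value).

Inductive value_in : value -> base -> Prop :=
| vin_int z : value_in (VInt z) BInt
| vin_str s : value_in (VStr s) BStr
| vin_bool b : value_in (VBool b) BBool
| vin_tuple vs bs : Forall2 value_in vs bs -> value_in (VTuple vs) (BTuple bs).

Inductive atom : Type := AVal (v : value) | AVar (x : vvar).

Definition venv := vvar -> option base.
Definition vupd (G : venv) (x : vvar) (B : base) : venv :=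
  fun y => if Nat.eqb y x then Some B else G y.

Inductive atom_ty (G : venv) : atom -> base -> Prop :=
| at_val v B : value_in v B -> atom_ty G (AVal v) B
| at_var x B : G x = Some B -> atom_ty G (AVar x) B.

(* Session types (syntax); equi-recursion is handled by unfolding below. *)
Inductive ty : Type :=
| TSel (bs : list (label * base * ty))   (* (+){ !l_i(B_i).S_i } *)
| TBra (bs : list (label * base * ty))   (* &{ ?l_i(B_i).S_i } *)
| TRec (X : tvar) (S : ty)
| TVar (X : tvar)
| TEnd.

Fixpoint tsubst (X : tvar) (T : ty) (S : ty) : ty :=
  match S with
  | TSel bs => TSel (map (fun b => let '(l, B, S') := b in (l, B, tsubst X T S')) bs)
  | TBra bs => TBra (map (fun b => let '(l, B, S') := b in (l, B, tsubst X T S')) bs)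
  | TRec Y S' => if Nat.eqb X Y then TRec Y S' else TRec Y (tsubst X T S')
  | TVar Y => if Nat.eqb X Y then T else TVar Y
  | TEnd => TEnd
  end.

Inductive unfolds : ty -> ty -> Prop :=
| unf_sel bs : unfolds (TSel bs) (TSel bs)
| unf_bra bs : unfolds (TBra bs) (TBra bs)
| unf_var X : unfolds (TVar X) (TVar X)
| unf_end : unfolds TEnd TEnd
| unf_rec X S H : unfolds (tsubst X (TRec X S) S) H -> unfolds (TRec X S) H.

Fixpoint tlookup (l : label) (bs : list (label * base * ty)) : option (base * ty) :=
  match bs with
  | [] => None
  | (l', B, T) :: bs' => if Nat.eqb l l' then Some (B, T) else tlookup l bs'
  end.

Definition is_bra (S : ty) (bs : list (label * base * ty)) : Prop :=
  unfolds S (TBra bs) /\ bs <> [].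
Definition is_sel (S : ty) (bs : list (label * base * ty)) : Prop :=
  unfolds S (TSel bs) /\ bs <> [].

(* Equi-recursive equality of session types (bisimilarity up to unfolding). *)
CoInductive teq : ty -> ty -> Prop :=
| teq_end S T : unfolds S TEnd -> unfolds T TEnd -> teq S T
| teq_var S T X : unfolds S (TVar X) -> unfolds T (TVar X) -> teq S T
| teq_sel S T bs1 bs2 :
    unfolds S (TSel bs1) -> unfolds T (TSel bs2) ->
    (forall l, tlookup l bs1 = None <-> tlookup l bs2 = None) ->
    (forall l B1 S1 B2 S2, tlookup l bs1 = Some (B1, S1) ->
        tlookup l bs2 = Some (B2, S2) -> B1 = B2 /\ teq S1 S2) ->
    teq S T
| teq_bra S T bs1 bs2 :
    unfolds S (TBra bs1) -> unfolds T (TBra bs2) ->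
    (forall l, tlookup l bs1 = None <-> tlookup l bs2 = None) ->
    (forall l B1 S1 B2 S2, tlookup l bs1 = Some (B1, S1) ->
        tlookup l bs2 = Some (B2, S2) -> B1 = B2 /\ teq S1 S2) ->
    teq S T.

Definition tenv := pvar -> option ty.
Definition tupd (Th : tenv) (X : pvar) (S : ty) : tenv :=
  fun Y => if Nat.eqb Y X then Some S else Th Y.

Section Processes.
(* Boolean predicates A: an arbitrary language with an arbitrary ("standard")
   typing relation  Gamma |- A : B. *)
Variable Pred : Type.

Inductive proc : Type :=
| PSel (l : label) (a : atom) (P : proc)            (* <| l(a).P *)
| PBra (bs : list (label * vvar * proc))            (* |> { l_i(x_i).P_i } *)
| PRec (X : pvar) (P : proc)
| PVar (X : pvar)
| PIf (A : Pred) (P Q : proc)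
| PNil.

Fixpoint plookup (l : label) (bs : list (label * vvar * proc)) : option (vvar * proc) :=
  match bs with
  | [] => None
  | (l', x, Q) :: bs' => if Nat.eqb l l' then Some (x, Q) else plookup l bs'
  end.

Variable pred_ty : venv -> Pred -> base -> Prop.

Inductive typed : tenv -> venv -> proc -> ty -> Prop :=
| tBra Th G pbs S tbs :
    is_bra S tbs ->
    (forall l B S', In (l, B, S') tbs ->
       exists x P', plookup l pbs = Some (x, P') /\ typed Th (vupd G x B) P' S') ->
    typed Th G (PBra pbs) S
| tSel Th G l a P S tbs B Si :
    is_sel S tbs -> tlookup l tbs = Some (B, Si) -> atom_ty G a B ->
    typed Th G P Si -> typed Th G (PSel l a P) S
| tRec Th G X P S : typed (tupd Th X S) G P S -> typed Th G (PRec X P) S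
| tPVar Th G X S T : Th X = Some T -> teq T S -> typed Th G (PVar X) S
| tIf Th G A P Q S :
    pred_ty G A BBool -> typed Th G P S -> typed Th G Q S -> typed Th G (PIf A P Q) S
| tNil Th G S : unfolds S TEnd -> typed Th G PNil S.

Record judg : Type := Judg { jTheta : tenv; jGamma : venv; jProc : proc; jTy : ty }.

(* Rule function: Phi J o  means  o \in Phi(J), with None standing for tt. *)
Inductive Phi : judg -> option judg -> Prop :=
| phi_bra Th G pbs S tbs l B S' x P' :
    is_bra S tbs ->
    (forall l0 B0 S0, In (l0, B0, S0) tbs -> exists x0 P0, plookup l0 pbs = Some (x0, P0)) ->
    In (l, B, S') tbs -> plookup l pbs = Some (x, P') ->
    Phi (Judg Th G (PBra pbs) S) (Some (Judg Th (vupd G x B) P' S'))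
| phi_sel Th G l a P S tbs B Si :
    is_sel S tbs -> tlookup l tbs = Some (B, Si) -> atom_ty G a B ->
    Phi (Judg Th G (PSel l a P) S) (Some (Judg Th G P Si))
| phi_if_l Th G A P Q S :
    pred_ty G A BBool -> Phi (Judg Th G (PIf A P Q) S) (Some (Judg Th G P S))
| phi_if_r Th G A P Q S :
    pred_ty G A BBool -> Phi (Judg Th G (PIf A P Q) S) (Some (Judg Th G Q S))
| phi_rec Th G X P S :
    Phi (Judg Th G (PRec X P) S) (Some (Judg (tupd Th X S) G P S))
| phi_nil Th G S : unfolds S TEnd -> Phi (Judg Th G PNil S) None
| phi_var Th G X S T : Th X = Some T -> teq T S -> Phi (Judg Th G (PVar X) S) None.

Definition Phi_empty (J : judg) : Prop := forall o, ~ Phi J o.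

(* (J, js_0, ..., js_{n-1}) is a failing derivation of J *)
Definition failing_derivation (J : judg) (js : list judg) : Prop :=
  (forall i, i < List.length js -> Phi (nth i (J :: js) J) (Some (nth i js J))) /\
  Phi_empty (last js J).

End Processes.

(* Main.v *)
Require Import Defs.
From Stdlib Require Import List Classical PeanoNat Lia.
Import ListNotations.

Section S.
Variable Pred : Type.
Variable pred_ty : venv -> Pred -> base -> Prop.

Fixpoint psize (p : proc Pred) : nat :=
  match p with
  | PSel _ _ q => S (psize q)
  | PBra bs => S ((fix f (bs : list (label * vvar * proc Pred)) :=
                    match bs with [] => 0 | (_, _, q) :: r => psize q + f r end) bs)
  | PRec _ q => S (psize q)
  | PVar _ _ => 1
  | PIf _ q r => S (psize q + psize r)
  | PNil _ => 1
  end.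

Lemma plookup_size l bs x q : plookup l bs = Some (x, q) -> psize q < psize (PBra bs).
Proof.
  induction bs as [|[[l' x'] q'] r IH]; simpl; [discriminate|].
  destruct (Nat.eqb l l'); intros H.
  - inversion H; subst; lia.
  - specialize (IH H). simpl in IH. lia.
Qed.

Lemma unfolds_det S H1 H2 : unfolds S H1 -> unfolds S H2 -> H1 = H2.
Proof.
  intros U; revert H2; induction U; intros H2 U2; inversion U2; subst; auto.
Qed.

Lemma last_cons {A} (a : A) l d : last (a :: l) d = last l a.
Proof.
  revert a d; induction l as [|b l IH]; intros a d; [reflexivity|].
  change (last (a :: b :: l) d) with (last (b :: l) d). rewrite !IH. reflexivity.
Qed.

Lemma typed_step J J' : typed pred_ty (jTheta J) (jGamma J) (jProc J) (jTy J) ->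
  Phi pred_ty J (Some J') -> typed pred_ty (jTheta J') (jGamma J') (jProc J') (jTy J').
Proof.
  intros T Ph; inversion Ph; subst; simpl in *; inversion T; subst.
  - match goal with
    | Hb1 : is_bra ?S ?t1, Hb2 : is_bra ?S ?t2, Hin : In _ ?t1,
      Hall : forall (l : label) (B : base) (S' : ty), In (l, B, S') ?t2 -> _,
      Hl : plookup _ _ = Some _ |- _ =>
      destruct Hb1 as [U1 _], Hb2 as [U2 _];
      pose proof (unfolds_det _ _ _ U1 U2) as E; injection E; intro; subst;
      destruct (Hall _ _ _ Hin) as (? & ? & L & Ty); rewrite Hl in L;
      injection L; intros; subst; exact Ty
    end.
  - match goal with
    | Hb1 : is_sel ?S ?t1, Hb2 : is_sel ?S ?t2,
      L1 : tlookup ?l ?t1 = Some _, L2 : tlookup ?l ?t2 = Some _ |- _ =>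
      destruct Hb1 as [U1 _], Hb2 as [U2 _];
      pose proof (unfolds_det _ _ _ U1 U2) as E; injection E; intro; subst;
      rewrite L1 in L2; injection L2; intros; subst; assumption
    end.
  - assumption.
  - assumption.
  - assumption.
Qed.

Lemma typed_nonempty J : typed pred_ty (jTheta J) (jGamma J) (jProc J) (jTy J) ->
  exists o, Phi pred_ty J o.
Proof.
  destruct J as [Th G P S]; simpl. intros T; inversion T; subst.
  - destruct H as [U NE]. destruct tbs as [|[[l B] S'] r]; [congruence|].
    destruct (H0 l B S' (or_introl eq_refl)) as (x & P' & L & _).
    eexists. eapply phi_bra; eauto.
    + split; eauto.
    + intros l0 B0 S0 Hin. destruct (H0 _ _ _ Hin) as (x0 & P0 & L0 & _). eauto.
    + left; reflexivity.
  - eexists; eapply phi_sel; eauto.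
  - eexists; eapply phi_rec.
  - eexists; eapply phi_var; eauto.
  - eexists; eapply phi_if_l; eauto.
  - eexists; eapply phi_nil; eauto.
Qed.

Lemma chain_typed js : forall J,
  (forall i, i < length js -> Phi pred_ty (nth i (J :: js) J) (Some (nth i js J))) ->
  typed pred_ty (jTheta J) (jGamma J) (jProc J) (jTy J) ->
  let L := last js J in typed pred_ty (jTheta L) (jGamma L) (jProc L) (jTy L).
Proof.
  induction js as [|a js IH]; intros J Hc T; cbv zeta; [exact T|].
  rewrite last_cons.
  assert (Ha : Phi pred_ty J (Some a)) by (apply (Hc 0); simpl; lia).
  apply IH.
  - intros i Hi. specialize (Hc (S i)). simpl in Hc.
    rewrite (nth_indep (a :: js) a J) by (simpl; lia).
    rewrite (nth_indep js a J) by lia.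
    apply Hc. lia.
  - exact (typed_step _ _ T Ha).
Qed.

Lemma not_typed_fail n : forall J, psize (jProc J) < n ->
  ~ typed pred_ty (jTheta J) (jGamma J) (jProc J) (jTy J) ->
  exists js, failing_derivation pred_ty J js.
Proof.
  induction n as [|n IH]; intros J Hs NT; [lia|].
  destruct (classic (Phi_empty pred_ty J)) as [E|NE].
  - exists []. split; [simpl; intros; lia | exact E].
  - destruct (classic (exists J', Phi pred_ty J (Some J') /\
        ~ typed pred_ty (jTheta J') (jGamma J') (jProc J') (jTy J'))) as [[J' [Ph NT']]|NX].
    + assert (Hs' : psize (jProc J') < n).
      { inversion Ph; subst; simpl in *;
        try (match goal with Hl : plookup _ _ = Some _ |- _ => pose proof (plookup_size _ _ _ _ Hl) end; simpl in *; lia); lia. }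
      destruct (IH J' Hs' NT') as [js [Hc He]].
      exists (J' :: js). split.
      * intros [|i] Hi; simpl; [exact Ph|].
        simpl in Hi.
        change (Phi pred_ty (nth i (J' :: js) J) (Some (nth i js J))).
        rewrite (nth_indep (J' :: js) J J') by (simpl; lia).
        rewrite (nth_indep js J J') by lia.
        apply (Hc i). simpl. lia.
      * rewrite last_cons. exact He.
    + exfalso. apply NT.
      assert (All : forall J', Phi pred_ty J (Some J') ->
                typed pred_ty (jTheta J') (jGamma J') (jProc J') (jTy J')).
      { intros J' Ph. apply NNPP. intros C. apply NX. eauto. }
      unfold Phi_empty in NE. apply not_all_ex_not in NE. destruct NE as [o NE].
      apply NNPP in NE.
      destruct J as [Th G P S]; simpl in *.
      inversion NE; subst.
      * eapply tBra; [eassumption|]. intros l0 B0 S0 Hin.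
        match goal with Hf : forall (l0 : label) (B0 : base) (S0 : ty), In _ _ -> _ |- _ =>
          destruct (Hf _ _ _ Hin) as (x0 & P0 & L0) end.
        exists x0, P0; split; auto.
        apply (All (Judg Th (vupd G x0 B0) P0 S0)). eapply phi_bra; eauto.
      * eapply tSel; eauto. apply (All (Judg Th G P0 Si)). eapply phi_sel; eauto.
      * eapply tIf; eauto.
        -- apply (All (Judg Th G P0 S)). eapply phi_if_l; eauto.
        -- apply (All (Judg Th G Q S)). eapply phi_if_r; eauto.
      * eapply tIf; eauto.
        -- apply (All (Judg Th G P0 S)). eapply phi_if_l; eauto.
        -- apply (All (Judg Th G Q S)). eapply phi_if_r; eauto.
      * apply tRec. apply (All (Judg (tupd Th X S) G P0 S)). apply phi_rec.
      * apply tNil; auto.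
      * eapply tPVar; eauto.
Qed.

End S.

Theorem mainTheorem5 (Pred : Type) (pred_ty : venv -> Pred -> base -> Prop)
    (Th : tenv) (G : venv) (P : proc Pred) (S : ty) :
  (~ typed pred_ty Th G P S ->
     exists js, failing_derivation pred_ty (Judg Th G P S) js) /\
  ((exists js, failing_derivation pred_ty (Judg Th G P S) js) ->
     ~ typed pred_ty Th G P S).
Proof.
  split.
  - intros NT. apply (not_typed_fail Pred pred_ty (Nat.succ (psize _ P))); simpl; auto.
  - intros [js [Hc He]] T.
    pose proof (chain_typed Pred pred_ty js (Judg Th G P S) Hc T) as TL. simpl in TL.
    destruct (typed_nonempty Pred pred_ty _ TL) as [o Ho]. exact (He o Ho).
Qed.
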